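(* Let $n\ge 4$ and let $\mathcal X$ be a $5$-general set of $\mathrm{PG}(n,q)$. Then $$|\mathcal X|\le \frac{\sqrt{8q^n+q^2-6q+1}+3q-5}{2(q-1)}.$$
   Context: $q$ is a prime power. For integers $r,s$, an $(r,s)$-set of $\mathrm{PG}(n,q)$ is a set $\mathcal X$ of points such that: (i) every $s$-dimensional projective subspace contains at most $r$ points of $\mathcal X$; (ii) $\mathcal X$ spans $\mathrm{PG}(n,q)$; (iii) some $(s+1)$-dimensional projective subspace contains $r+2$ points of $\mathcal X$. A $k$-general set is a $(k-1,k-2)$-set; thus a $5$-general set is a $(4,3)$-set (every solid, i.e. $3$-dimensional projective subspace, contains at most $4$ of its points, so any $5$ of its points are in general position). *)

(* Defs.v *)
From HB Require Import structures.
From mathcomp Require Import all_boot all_order all_algebra all_field.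
Set Implicit Arguments. Unset Strict Implicit. Unset Printing Implicit Defensive.
Import Order.TTheory GRing.Theory Num.Theory.

(* PG(n,q) is modelled over a finite field F (so q = #|F| is a prime power):
   a point is the 1-dimensional row space <<v>> of a nonzero vector
   v : 'rV[F]_(n.+1); a projective s-dimensional subspace is a vector subspace
   (represented by a square matrix S, via its row space) with \rank S = s+1. *)

Definition pointset (F : finFieldType) (n : nat) (X : {set 'rV[F]_(n.+1)}) :=
  (forall x, x \in X -> x != 0%R) /\
  (forall x y, x \in X -> y \in X -> (x == y)%MS -> x = y).

Definition npts (F : finFieldType) (n : nat) (X : {set 'rV[F]_(n.+1)})
  (S : 'M[F]_(n.+1)) : nat := #|[set x in X | (x <= S)%MS]|.

Definition rs_set (F : finFieldType) (n r s : nat) (X : {set 'rV[F]_(n.+1)}) :=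
  [/\ pointset X,
      (forall S : 'M[F]_(n.+1), \rank S = s.+1 -> npts X S <= r),
      row_full (\sum_(x in X) <<x>>)%MS &
      (exists S : 'M[F]_(n.+1), \rank S = s.+2 /\ (r.+2 <= npts X S)%N)].

Definition k_general (F : finFieldType) (n k : nat) (X : {set 'rV[F]_(n.+1)}) :=
  rs_set k.-1 k.-2 X.

(* Main.v *)
Require Import Defs.
From HB Require Import structures.
From mathcomp Require Import all_boot all_order all_algebra all_field.
From mathcomp Require Import ring lra zify.
Import Order.TTheory GRing.Theory Num.Theory.
Set Implicit Arguments. Unset Strict Implicit.
Local Open Scope ring_scope.
Lemma ext_rank (F : fieldType) N d : forall (A : 'M[F]_N), (\rank A + d <= N)%N ->
  exists S : 'M[F]_N, (A <= S)%MS /\ \rank S = (\rank A + d)%N.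
Proof.
elim: d => [|d IH] A hA.
  by exists A; rewrite addn0 submx_refl.
have : ~~ row_full A.
  by rewrite /row_full; apply/negP => /eqP h; move: hA; rewrite h addnS ltnNge leq_addr.
rewrite -sub1mx => /row_subPn [i hi].
set v := row i 1%:M in hi.
have sA : (A <= A + v)%MS by rewrite addsmxSl.
have r1 : \rank (A + v)%MS = (\rank A).+1.
  apply/eqP; rewrite eqn_leq; apply/andP; split.
    apply: leq_trans (mxrank_adds_leqif A v) _.
    by rewrite rank_rV; case: (v != 0); rewrite ?addn1 ?addn0.
  have := mxrank_leqif_sup sA; case=> le eq.
  rewrite ltn_neqAle le andbT eq.
  by apply: contra hi => h; apply: submx_trans (addsmxSr A v) h.
have hr : (\rank (A + v)%MS + d <= N)%N by rewrite r1 addSnnS.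
have [S [h1 h2]] := IH _ hr.
by exists S; split; [apply: submx_trans h1 | rewrite h2 r1 addSnnS].
Qed.
Lemma indep5 (F : finFieldType) (n : nat) (X : {set 'rV[F]_(n.+1)}) :
  (4 <= n)%N ->
  (forall S : 'M[F]_(n.+1), \rank S = 4%N -> (npts X S <= 4)%N) ->
  forall (T : {set 'rV[F]_(n.+1)}) (c : 'rV[F]_(n.+1) -> F),
  T \subset X -> #|T| = 5%N -> \sum_(x in T) c x *: x = 0 ->
  forall x, x \in T -> c x = 0.
Proof.
move=> hn H4 T c sTX cT hsum.
pose M : 'M[F]_(#|T|, n.+1) := \matrix_(i < #|T|) (enum_val i : 'rV_(n.+1)).
pose u : 'rV[F]_(#|T|) := \row_i c (enum_val i).
have uM : u *m M = 0.
  rewrite mulmx_sum_row; apply: etrans hsum; rewrite (big_enum_val (fun x => c x *: x)).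
  by apply: eq_bigr => i _; rewrite rowK mxE.
have : u = 0.
  apply/eqP/contraT => unz.
  have nf : ~~ row_free M.
    apply/negP => /row_free_inj hi.
    by move: unz; rewrite (hi _ u 0) ?mul0mx ?eqxx.
  have rM : (\rank M <= 4)%N.
    have : (\rank M < 5)%N by rewrite -[5%N]cT ltn_neqAle nf rank_leq_row.
    by [].
  have [S [sMS rS]] : exists S : 'M[F]_(n.+1), (<<M>> <= S)%MS /\ \rank S = (\rank <<M>> + (4 - \rank M))%N.
    apply: (@ext_rank _ _ (4 - \rank M)%N <<M>>%MS); rewrite genmxE subnKC // ltnS; exact: ltnW.
  rewrite genmxE subnKC // in rS.
  have := H4 _ rS; rewrite /npts.
  suff : (T \subset [set x in X | (x <= S)%MS]) by move/subset_leq_card; rewrite cT => /leq_trans h /h.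
  apply/subsetP => x xT; rewrite inE (subsetP sTX) //=.
  have := rowK (fun i : 'I_#|T| => (enum_val i : 'rV_(n.+1))) (enum_rank_in xT x).
  rewrite enum_rankK_in // => <-.
  by apply: submx_trans sMS; rewrite genmxE row_sub.
move=> u0 x xT.
have := congr1 (fun w : 'rV[F]_(#|T|) => w 0 (enum_rank_in xT x)) u0.
by rewrite /= !mxE enum_rankK_in.
Qed.

Definition gfun (V : eqType) (F : ringType) (Y Z : V) (a b : F) (x : V) : F :=
  (if x == Y then a else 0) + (if x == Z then b else 0).

Definition gcond (V : eqType) (F : ringType) (P Y Z : V) (a b : F) :=
  [/\ (a == 0) = (Y == P), (b == 0) = (Z == P) & (Y != Z) || (Y == P)].

Lemma gfunY (V : eqType) (F : ringType) (P Y Z : V) (a b : F) :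
  gcond P Y Z a b -> gfun Y Z a b Y = a.
Proof.
case=> c1 c2 c3; rewrite /gfun eqxx /=.
case: eqP => [e|_]; last by rewrite addr0.
subst Z; move: c3; rewrite eqxx /= => /eqP e; subst Y.
by move: c1 c2; rewrite !eqxx => /eqP -> /eqP ->; rewrite addr0.
Qed.

Lemma gfunZ (V : eqType) (F : ringType) (P Y Z : V) (a b : F) :
  gcond P Y Z a b -> gfun Y Z a b Z = b.
Proof.
case=> c1 c2 c3; rewrite /gfun eqxx /=.
case: eqP => [e|_]; last by rewrite add0r.
subst Z; move: c3; rewrite eqxx /= => /eqP e; subst Y.
by move: c1 c2; rewrite !eqxx => /eqP -> /eqP ->; rewrite addr0.
Qed.

Lemma gsupp (V : eqType) (F : ringType) (P x Y Z : V) (a b : F) :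
  gfun Y Z a b x != 0 -> x = Y \/ x = Z.
Proof.
rewrite /gfun; case: ifP => [/eqP ? _|_]; first by left.
by case: ifP => [/eqP ? _|_]; [right | rewrite addr0 eqxx].
Qed.

Lemma gsuppY (V : eqType) (F : ringType) (P Y Z Y' Z' : V) (a b a' b' : F) :
  gcond P Y Z a b -> (forall x, gfun Y Z a b x = gfun Y' Z' a' b' x) ->
  Y <> P -> Y = Y' \/ Y = Z'.
Proof.
move=> c E nYP; apply: (@gsupp _ _ P _ _ _ a' b'); rewrite -E (gfunY c).
by case: c => c1 _ _; rewrite c1; apply/eqP.
Qed.

Lemma gsuppZ (V : eqType) (F : ringType) (P Y Z Y' Z' : V) (a b a' b' : F) :
  gcond P Y Z a b -> (forall x, gfun Y Z a b x = gfun Y' Z' a' b' x) ->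
  Z <> P -> Z = Y' \/ Z = Z'.
Proof.
move=> c E nYP; apply: (@gsupp _ _ P _ _ _ a' b'); rewrite -E (gfunZ c).
by case: c => _ c1 _; rewrite c1; apply/eqP.
Qed.

Lemma comb (V : eqType) (F : ringType) (r : V -> nat) (P Y Z Y' Z' : V) (a b a' b' : F) :
  injective r ->
  gcond P Y Z a b -> gcond P Y' Z' a' b' ->
  (forall x, gfun Y Z a b x = gfun Y' Z' a' b' x) ->
  (r Y < r Z)%N = (r Y' < r Z')%N ->
  [/\ Y = Y', Z = Z', a = a' & b = b'].
Proof.
move=> ri c c' E R.
have E' : forall x, gfun Y' Z' a' b' x = gfun Y Z a b x by move=> x; rewrite E.
suff [e1 e2] : Y = Y' /\ Z = Z'.
  subst Y' Z'; split => //.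
    by rewrite -(gfunY c) E (gfunY c').
  by rewrite -(gfunZ c) E (gfunZ c').
have h1 := gsuppY c E; have h2 := gsuppZ c E.
have h3 := gsuppY c' E'; have h4 := gsuppZ c' E'.
have d1 : Y <> P -> Y <> Z.
  by case: c => _ _ /orP [/eqP ? ?|/eqP].
have d2 : Y' <> P -> Y' <> Z'.
  by case: c' => _ _ /orP [/eqP ? ?|/eqP].
have d3 : Y = P -> Z <> P -> Y <> Z by move=> -> ? ?; subst.
have d4 : Y' = P -> Z' <> P -> Y' <> Z' by move=> -> ? ?; subst.
have T : Y = Z' -> Z = Y' -> Y <> Z -> False.
  move=> e1 e2 n; move: R; rewrite -e1 -e2.
  by case: (ltngtP (r Y) (r Z)) => // /ri e _; apply: n e.
case: (Y =P P) => eY; case: (Z =P P) => eZ; case: (Y' =P P) => eY'; case: (Z' =P P) => eZ';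
  repeat match goal with
  | H : ?A -> _ \/ _, H' : ?A |- _ => case: (H H') => ?; clear H
  | H : ?A -> ?B -> _ \/ _, H' : ?A, H'' : ?B |- _ => case: (H H' H'') => ?; clear H
  end;
  try (split; congruence);
  exfalso; first [congruence | by apply: T; congruence | by apply: d1; congruence | by apply: d2; congruence | by apply: d3; congruence | by apply: d4; congruence | by apply: T => //; apply: d1 | by apply: T => //; apply: d3].
Qed.

Lemma ext_set (T : finType) k : forall (A B : {set T}), A \subset B -> (#|A| + k <= #|B|)%N ->
  exists C : {set T}, [/\ A \subset C, C \subset B & #|C| = (#|A| + k)%N].
Proof.
elim: k => [|k IH] A B sAB hk.
  by exists A; rewrite addn0 subxx.
have : (0 < #|B :\: A|)%N by rewrite cardsDS // subn_gt0; apply: leq_trans hk; rewrite addnS ltnS leq_addr.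
case/card_gt0P => x; rewrite inE => /andP [xA xB].
have s' : x |: A \subset B by rewrite subUset sub1set xB sAB.
have hk' : (#|x |: A| + k <= #|B|)%N by rewrite cardsU1 xA add1n addSnnS.
have [C [h1 h2 h3]] := IH _ _ s' hk'.
exists C; split => //; first by apply: subset_trans h1; apply: subsetUr.
by rewrite h3 cardsU1 xA add1n addSnnS.
Qed.

Lemma sum_delta (F : ringType) (V : lmodType F) (T : finType) (f : T -> V) (A : {set T}) (Y : T) (a : F) :
  Y \in A -> \sum_(x in A) (if x == Y then a else 0) *: f x = a *: f Y.
Proof.
move=> YA; rewrite (bigD1 Y) //= eqxx big1 ?addr0 // => x /andP [_ /negPf ->].
by rewrite scale0r.
Qed.

Lemma gfunP (V : eqType) (F : ringType) (P Y Z : V) (a b : F) :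
  gcond P Y Z a b -> gfun Y Z a b P = 0.
Proof.
case=> c1 c2 _; rewrite /gfun.
have ha : (if P == Y then a else 0) = 0 by case: ifP => // /eqP e; apply/eqP; rewrite c1 e eqxx.
have hb : (if P == Z then b else 0) = 0 by case: ifP => // /eqP e; apply/eqP; rewrite c2 e eqxx.
by rewrite ha hb addr0.
Qed.

Lemma sum_gfun (F : ringType) (V : lmodType F) (T : finType) (f : T -> V) (A : {set T}) (Y Z : T) (a b : F) :
  Y \in A -> Z \in A -> \sum_(x in A) gfun Y Z a b x *: f x = a *: f Y + b *: f Z.
Proof.
move=> YA ZA; rewrite /gfun.
under eq_bigr do rewrite scalerDl.
by rewrite big_split /= !sum_delta.
Qed.

Lemma coef_eq (F : finFieldType) n (X : {set 'rV[F]_(n.+1)}) :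
  (4 <= n)%N -> (forall S : 'M[F]_(n.+1), \rank S = 4%N -> (npts X S <= 4)%N) -> (5 <= #|X|)%N ->
  forall P Y Z Y' Z' (a b t a' b' t' : F), P \in X -> Y \in X -> Z \in X -> Y' \in X -> Z' \in X ->
  gcond P Y Z a b -> gcond P Y' Z' a' b' ->
  a *: Y + b *: Z + t *: P = a' *: Y' + b' *: Z' + t' *: P ->
  (forall x, gfun Y Z a b x = gfun Y' Z' a' b' x) /\ t = t'.
Proof.
move=> hn H4 h5 P Y Z Y' Z' a b t a' b' t' PX YX ZX Y'X Z'X c c' E.
pose T0 : {set 'rV[F]_(n.+1)} := [set x in [:: P; Y; Z; Y'; Z']].
have sT0 : T0 \subset X.
  by apply/subsetP => x; rewrite inE !in_cons in_nil orbF => /or4P [/eqP ->|/eqP ->|/eqP ->|/orP [/eqP ->|/eqP ->]].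
have cT0 : (#|T0| <= 5)%N by rewrite cardsE; apply: card_size.
have hk : (#|T0| + (5 - #|T0|) <= #|X|)%N by rewrite subnKC.
have [T [s1 s2 s3]] := ext_set sT0 hk.
rewrite subnKC // in s3.
have inT : forall x, x \in [:: P; Y; Z; Y'; Z'] -> x \in T.
  by move=> x hx; apply: (subsetP s1); rewrite inE.
have PT : P \in T by apply: inT; rewrite !inE eqxx.
have YT : Y \in T by apply: inT; rewrite !inE eqxx !orbT.
have ZT : Z \in T by apply: inT; rewrite !inE eqxx !orbT.
have Y'T : Y' \in T by apply: inT; rewrite !inE eqxx !orbT.
have Z'T : Z' \in T by apply: inT; rewrite !inE eqxx !orbT.
pose cf x := gfun Y Z a b x + (if x == P then t else 0) - (gfun Y' Z' a' b' x + (if x == P then t' else 0)).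
have hs : \sum_(x in T) cf x *: x = 0.
  rewrite /cf /gfun; under eq_bigr do rewrite scalerBl !scalerDl.
  rewrite sumrB !big_split /= !(sum_delta id) //=.
  by rewrite E subrr.
have h0 := indep5 hn H4 s2 s3 hs.
have hc : forall x, cf x = 0.
  move=> x; case: (boolP (x \in T)) => xT; first exact: h0.
  have nx : forall y, y \in T -> x == y = false by move=> y yT; apply/negP => /eqP e; move: xT; rewrite e yT.
  by rewrite /cf /gfun !nx // !addr0 subrr.
have tt : t = t'.
  have := hc P; rewrite /cf (gfunP c) (gfunP c') eqxx !add0r.
  by move/eqP; rewrite subr_eq0 => /eqP.
split => // x; have := hc x; rewrite /cf tt.
by move/eqP; rewrite subr_eq0 => /eqP /addIr.
Qed.

Lemma final (R : rcfType) (m' u n : nat) : (1 <= u)%N ->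
  (2 + 2 * m' * u + (m' * m' - m') * u * u <= 2 * (u.+1) ^ n)%N ->
  let q : R := (u.+1)%:R in
  (m'.+1)%:R <= (Num.sqrt (8 * q ^+ n + q ^+ 2 - 6 * q + 1) + 3 * q - 5) / (2 * (q - 1)).
Proof.
move=> hu h /=; set q : R := (u.+1)%:R.
have hm : (m' <= m' * m')%N by case: m' {h} => // k; rewrite leq_pmulr.
have hR : 2 + 2 * m'%:R * u%:R + (m'%:R * m'%:R - m'%:R) * u%:R * u%:R <= 2 * (u%:R + 1) ^+ n :> R.
  have := h; rewrite -(ler_nat R) !natrD !natrM natrB // !natrM natrX -addn1 natrD.
  move=> h'; rewrite (_ : (u%:R + 1) = (u.+1)%:R :> R); last by rewrite -addn1 natrD.
  lra.
have u1 : 1 <= u%:R :> R by rewrite ler1n.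
have qe : q = u%:R + 1 by rewrite /q -addn1 natrD.
have qp : 0 < 2 * (q - 1) by rewrite qe addrK; lra.
rewrite ler_pdivlMr //.
set w := (m'.+1)%:R * (2 * (q - 1)) - 3 * q + 5.
suff : w <= Num.sqrt (8 * q ^+ n + q ^+ 2 - 6 * q + 1) by rewrite /w; lra.
have [wle|wgt] := lerP w 0.
  by apply: le_trans wle _; apply: sqrtr_ge0.
have -> : w = Num.sqrt (w ^+ 2) by rewrite sqrtr_sqr ger0_norm // ltW.
rewrite ler_sqrt; last first.
  have q1 : 1 <= q by rewrite qe; lra.
  have := exprn_ege1 n q1; set Qn := q ^+ n => hQ.
  have -> : 8 * Qn + q ^+ 2 - 6 * q + 1 = 8 * (Qn - 1) + (q - 3) ^+ 2 by ring.
  apply: addr_ge0; last exact: sqr_ge0.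
  lra.
rewrite /w qe -addn1 natrD.
set Q := (u%:R + 1) ^+ n in hR *.
set M := m'%:R in hR *; set U := u%:R in hR u1 *.
have -> : (M + 1) * (2 * (U + 1 - 1)) - 3 * (U + 1) + 5 = 2*U*M - U + 2 by ring.
nra.
Qed.

Lemma cardsU_disj (T : finType) (A B : {set T}) : [disjoint A & B] -> #|A :|: B| = (#|A| + #|B|)%N.
Proof. by move=> h; apply/eqP; rewrite (leq_card_setU A B).2. Qed.

Lemma count_main (F : finFieldType) (n : nat) (X : {set 'rV[F]_(n.+1)}) (P : 'rV[F]_(n.+1)) :
  (4 <= n)%N -> (forall S : 'M[F]_(n.+1), \rank S = 4%N -> (npts X S <= 4)%N) -> (5 <= #|X|)%N ->
  P \in X -> P != 0 ->
  (#|F| + #|X :\ P| * #|[set: F] :\ 0%R| * #|F| + #|X :\ P| * #|[set: F] :\ 0%R| * #|F|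
   + (#|X :\ P| * #|X :\ P| - #|X :\ P|) * #|[set: F] :\ 0%R| * #|[set: F] :\ 0%R| * #|F| + #|F|
   <= 2 * #|F| ^ n.+1)%N.
Proof.
move=> hn H4 h5 PX Pnz.
set Xs := X :\ P.
set U := [set: F] :\ 0.
pose V := 'rV[F]_(n.+1).
pose diag := [set (y, y) | y in Xs].
pose OD := [set p in setX Xs Xs | p.1 != p.2].
pose DA := setX (setX (setX (setX [set P] [set P]) [set (0 : F)]) [set (0 : F)]) [set: F].
pose DB1 := setX (setX (setX (setX Xs [set P]) U) [set (0 : F)]) [set: F].
pose DB2 := setX (setX (setX (setX [set P] Xs) [set (0 : F)]) U) [set: F].
pose DC := setX (setX (setX OD U) U) [set: F].
pose D := DA :|: DB1 :|: DB2 :|: DC.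
pose f (d : (((V * V) * F) * F) * F) : bool * V :=
  ((enum_rank d.1.1.1.1 < enum_rank d.1.1.1.2)%N,
   d.1.1.2 *: d.1.1.1.1 + d.1.2 *: d.1.1.1.2 + d.2 *: P).
pose E := [set (true, t *: P) | t in [set: F]].
have Dc : forall Y Z a b t, (((Y, Z), a), b, t) \in D -> [/\ Y \in X, Z \in X & gcond P Y Z a b].
  move=> Y Z a b t; rewrite !inE /= !andbT.
  have [->|nY] := eqVneq Y P; have [->|nZ] := eqVneq Z P; rewrite /= ?eqxx ?andbF ?andbT ?orbF /=;
    move=> H; repeat match goal with H : is_true (_ && _) |- _ => case/andP: H => ? ? end;
    (split => //; split; rewrite ?eqxx ?(negbTE nY) ?(negbTE nZ) ?orbT ?orbF //; try by apply/negbTE).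
have rinj : injective (fun x : V => nat_of_ord (enum_rank x)).
  by move=> x y /val_inj e; apply: (can_inj (@enum_rankK V)).
have finj : {in D &, injective f}.
  move=> [[[[Y Z] a] b] t] [[[[Y' Z'] a'] b'] t'] /Dc [YX ZX c] /Dc [Y'X Z'X c'].
  rewrite /f /= => -[R Ev].
  have [G tt] := coef_eq hn H4 h5 PX YX ZX Y'X Z'X c c' Ev.
  have [e1 e2 e3 e4] := comb rinj c c' G R.
  by subst.
have c0 : gcond P P P (0 : F) 0 by split; rewrite ?eqxx.
have fE : forall d, d \in D -> f d \notin E.
  move=> [[[[Y Z] a] b] t] /Dc [YX ZX c]; apply/imsetP => -[t' _].
  rewrite /f /= => -[R Ev].
  have Ev' : a *: Y + b *: Z + t *: P = 0 *: P + 0 *: P + t' *: P by rewrite !scale0r !add0r.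
  have [G _] := coef_eq hn H4 h5 PX YX ZX PX PX c c0 Ev'.
  have g0 : forall x, gfun P P (0 : F) 0 x = 0 by move=> x; rewrite /gfun !if_same addr0.
  have a0 : a = 0 by rewrite -(gfunY c) G g0.
  have b0 : b = 0 by rewrite -(gfunZ c) G g0.
  case: c => c1 c2 _; move: c1 c2; rewrite a0 b0 eqxx => /esym/eqP eY /esym/eqP eZ.
  by move: R; rewrite eY eZ ltnn.
have cD : #|D| = (#|F| + #|Xs| * #|U| * #|F| + #|Xs| * #|U| * #|F| + #|OD| * #|U| * #|U| * #|F|)%N.
  rewrite /D !cardsU_disj; try (rewrite disjoints_subset; apply/subsetP => -[[[[Y Z] a] b] t]; rewrite !inE /=;
    have [eY|nY] := eqVneq Y P; have [eZ|nZ] := eqVneq Z P; rewrite ?eY ?eZ /= ?eqxx ?andbF ?andbT ?orbF //=).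
  rewrite !cardsX !cards1 !cardsT ?mul1n ?muln1 //.
have cOD : #|OD| = (#|Xs| * #|Xs| - #|Xs|)%N.
  have := cardsID [set p : V * V | p.1 == p.2] (setX Xs Xs).
  have -> : setX Xs Xs :\: [set p : V * V | p.1 == p.2] = OD.
    by apply/setP => -[y z]; rewrite !inE /= andbC.
  have -> : setX Xs Xs :&: [set p : V * V | p.1 == p.2] = [set (y, y) | y in Xs].
    apply/setP => -[y z]; rewrite !inE /=; apply/andP/imsetP => [[/andP [yX zX] /eqP <-]|[w wX [-> ->]]].
      by exists y => //; rewrite !inE.
    by move: wX; rewrite !inE => ->; rewrite eqxx.
  rewrite card_imset; last by move=> ? ? [].
  by rewrite cardsX => <-; rewrite addKn.
rewrite -cOD -cD.
have cE : #|E| = #|F|.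
  rewrite card_imset ?cardsT // => t1 t2 [] /eqP; rewrite -subr_eq0 -scalerBl scaler_eq0 (negbTE Pnz) orbF subr_eq0.
  by move/eqP.
have sub : f @: D \subset ~: E.
  by apply/subsetP => _ /imsetP [d dD ->]; rewrite inE; apply: fE.
have := subset_leq_card sub; rewrite card_in_imset // => hD.
have := cardsC E; rewrite cE card_prod card_bool card_mx mul1n => hC.
by rewrite -hC addnC leq_add2l.
Qed.

Theorem mainTheorem2 (R : rcfType) (F : finFieldType) (n : nat)
  (X : {set 'rV[F]_(n.+1)}) :
  (4 <= n)%N -> k_general 5 X ->
  let q : R := (#|F|)%:R in
  (#|X|)%:R <= (Num.sqrt (8 * q ^+ n + q ^+ 2 - 6 * q + 1) + 3 * q - 5)
               / (2 * (q - 1)).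
Proof.
move=> hn H; case: H => -[Xnz Xinj] H4 _ [S0 [_ hS0]].
have H4' : forall S : 'M[F]_(n.+1), \rank S = 4%N -> (npts X S <= 4)%N := H4.
have h6 : (6 <= #|X|)%N.
  apply: leq_trans hS0 _; apply: subset_leq_card; apply/subsetP => x; by rewrite inE => /andP [].
have h5 : (5 <= #|X|)%N by apply: ltnW h6.
have [P PX] : exists P, P \in X by apply/card_gt0P; apply: leq_trans h5.
have Pnz := Xnz P PX.
have hc := count_main hn H4' h5 PX Pnz.
move: hc; set m' := #|X :\ P|; set u := #|[set: F] :\ 0%R| => hc.
have eF : #|F| = u.+1 by rewrite -cardsT (cardsD1 0%R) inE.
have eX : #|X| = m'.+1 by rewrite (cardsD1 P) PX.
have hu : (1 <= u)%N by apply/card_gt0P; exists 1%R; rewrite !inE oner_neq0.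
have h' : (2 + 2 * m' * u + (m' * m' - m') * u * u <= 2 * (u.+1) ^ n)%N.
  rewrite -(@leq_pmul2l u.+1) //; move: hc; rewrite eF expnS.
  set A := (m' * m' - m')%N; set Q := u.+1; set Qn := (Q ^ n)%N.
  move=> hc; nia.
move=> /=; rewrite eX eF.
exact: final.
Qed.
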